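(* Let $0<a\le1$. Then: (1) $\Phi_2(\sigma_1,\sigma_2,a,1,1)>0$ for $\sigma_1>0$, $\sigma_2>1$, $\sigma_1+\sigma_2>2$. (2) If $z_2\in[-1,1)$, $z_2\ne0$, then $\Phi_2(\sigma_1,\sigma_2,a,1,z_2)>0$ for $\sigma_1>1$, $\sigma_2>0$. (3) If $z_1\in[-1,1)$, $z_1\ne0$, then $\Phi_2(\sigma_1,\sigma_2,a,z_1,1)>0$ for $\sigma_1>0$, $\sigma_2>1$. (4) If $z_1,z_2\in[-1,1)$, both nonzero, then $\Phi_2(\sigma_1,\sigma_2,a,z_1,z_2)>0$ for $\sigma_1>0$, $\sigma_2>0$.
   Context: For $0<a\le1$, $s_1,s_2\in\mathbb{C}$ and $z_1,z_2\in\mathbb{C}$ with $0<|z_1|,|z_2|\le1$, the Hurwitz–Lerch type Euler–Zagier double zeta function is $$\Phi_2(s_1,s_2,a,z_1,z_2):=\sum_{m=0}^\infty\frac{z_1^m}{(m+a)^{s_1}}\sum_{n=1}^\infty\frac{z_2^{n-1}}{(m+n+a)^{s_2}},$$ convergent absolutely for $\Re s_1>0$, $\Re s_2>1$, $\Re(s_1+s_2)>2$, and understood elsewhere via its meromorphic continuation to $\mathbb{C}^2$. *)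

(* Defs.v *)
From Stdlib Require Import Reals.
From Coquelicot Require Import Coquelicot.
Open Scope R_scope.

(* Real-parameter values of the Hurwitz-Lerch type Euler-Zagier double zeta
   function, given by the iterated series
     Phi_2(s1,s2,a,z1,z2) = sum_{m>=0} z1^m/(m+a)^s1 * sum_{n>=1} z2^(n-1)/(m+n+a)^s2.
   The inner index k corresponds to n = k+1. *)

Definition Phi2_inner_term (s2 a z2 : R) (m k : nat) : R :=
  z2 ^ k / Rpower (INR m + INR k + 1 + a) s2.

Definition Phi2_inner (s2 a z2 : R) (m : nat) : R :=
  Series (Phi2_inner_term s2 a z2 m).

Definition Phi2_outer_term (s1 s2 a z1 z2 : R) (m : nat) : R :=
  z1 ^ m / Rpower (INR m + a) s1 * Phi2_inner s2 a z2 m.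

Definition Phi2 (s1 s2 a z1 z2 : R) : R :=
  Series (Phi2_outer_term s1 s2 a z1 z2).

Definition Phi2_converges (s1 s2 a z1 z2 : R) : Prop :=
  (forall m : nat, ex_series (Phi2_inner_term s2 a z2 m)) /\
  ex_series (Phi2_outer_term s1 s2 a z1 z2).

(* Main.v *)
Require Import Defs.
From Stdlib Require Import Reals Lra Lia Psatz FunctionalExtensionality.
From Coquelicot Require Import Coquelicot.
Open Scope R_scope.
Lemma Rp_pos x s : 0 < Rpower x s.
Proof. unfold Rpower; apply exp_pos. Qed.

Lemma Series_ge0 u : ex_series u -> (forall n, 0 <= u n) -> 0 <= Series u.
Proof.
  intros He Hp.
  assert (H := Series_le (fun _ => 0) u (fun n => conj (Rle_refl 0) (Hp n)) He).
  rewrite (Series_ext (fun _ => 0) (fun n => 0 * u n)) in H by (intros; ring).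
  rewrite Series_scal_l in H. lra.
Qed.

Lemma Series_gt0 u : ex_series u -> (forall n, 0 <= u n) -> 0 < u 0%nat -> 0 < Series u.
Proof.
  intros He Hp H0. rewrite Series_incr_1 by auto.
  assert (0 <= Series (fun k => u (S k))).
  { apply Series_ge0. now apply ex_series_incr_1 in He. intros; apply Hp. }
  lra.
Qed.

Lemma lim0 b s : 0 < b -> 0 < s -> is_lim_seq (fun k => / Rpower (INR k + b) s) 0.
Proof.
  intros Hb Hs. apply is_lim_seq_Reals. intros eps He.
  destruct (INR_unbounded (Rpower (/ eps) (/ s))) as [N HN].
  exists N. intros n Hn. unfold R_dist. rewrite Rminus_0_r.
  assert (HR := Rp_pos (INR n + b) s).
  rewrite Rabs_pos_eq by (left; apply Rinv_0_lt_compat; lra).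
  assert (HnN : INR N <= INR n) by (apply le_INR; lia).
  assert (Hlt : Rpower (Rpower (/ eps) (/ s)) s < Rpower (INR n + b) s).
  { apply Rlt_Rpower_l; auto. split. apply Rp_pos. lra. }
  rewrite Rpower_mult, Rinv_l, Rpower_1 in Hlt by (try lra; apply Rinv_0_lt_compat; lra).
  rewrite <- (Rinv_inv eps). apply Rinv_lt_contravar; auto.
  apply Rmult_lt_0_compat; auto. apply Rinv_0_lt_compat; lra.
Qed.

Lemma tele_ineq x r : 0 < x -> 0 < r ->
  / Rpower (x + 1) (r + 1) <= (/ Rpower x r - / Rpower (x + 1) r) / r.
Proof.
  intros Hx Hr.
  assert (Hl : 1 / (x+1) <= ln (x+1) - ln x).
  { assert (H := exp_ineq1_le (ln (x / (x+1)))).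
    rewrite exp_ln in H by (apply Rdiv_lt_0_compat; lra).
    rewrite ln_div in H by lra.
    assert (x / (x+1) = 1 - 1/(x+1)) by (field; lra). lra. }
  set (A := Rpower x r). set (B := Rpower (x+1) r).
  assert (HA : 0 < A) by apply Rp_pos. assert (HB : 0 < B) by apply Rp_pos.
  assert (HBA : B = A * exp (r * (ln (x+1) - ln x))).
  { unfold A, B, Rpower. rewrite <- exp_plus. f_equal. ring. }
  assert (He := exp_ineq1_le (r * (ln (x + 1) - ln x))).
  assert (HBA2 : A * (1 + r / (x+1)) <= B).
  { rewrite HBA. apply Rmult_le_compat_l. lra.
    assert (r * (1/(x+1)) <= r * (ln (x+1) - ln x)) by (apply Rmult_le_compat_l; lra).
    unfold Rdiv in *. lra. }
  rewrite Rpower_plus, Rpower_1 by lra. fold B.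
  assert (Hx1 : 0 < x + 1) by lra.
  apply (Rmult_le_reg_r (A * B * (x+1) * r)).
  { repeat apply Rmult_lt_0_compat; lra. }
  replace (/ (B * (x + 1)) * (A * B * (x + 1) * r)) with (A * r) by (field; lra).
  replace ((/ A - / B) / r * (A * B * (x + 1) * r)) with ((B - A) * (x+1)) by (field; lra).
  assert (A * (1 + r/(x+1)) * (x+1) = A * (x+1) + A * r) by (field; lra).
  nra.
Qed.

Lemma tele_series c r : 0 < c -> 0 < r ->
  is_series (fun k => (/ Rpower (c + INR k) r - / Rpower (c + INR k + 1) r) / r)
            (/ Rpower c r / r).
Proof.
  intros Hc Hr.
  set (u := fun k => / Rpower (c + INR k) r).
  apply is_series_Reals. 
  assert (Hsum : forall n, sum_f_R0 (fun k => (u k - u (S k)) / r) n = (u 0%nat - u (S n)) / r).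
  { induction n; simpl. reflexivity. rewrite IHn. field. lra. }
  assert (Hlim : is_lim_seq (fun n => (u 0%nat - u (S n)) / r) (/ Rpower c r / r)).
  { assert (Hu : is_lim_seq u 0).
    { apply is_lim_seq_ext with (fun k => / Rpower (INR k + c) r).
      { intros; unfold u; now rewrite Rplus_comm. }
      now apply lim0. }
    apply (is_lim_seq_incr_1 u 0) in Hu.
    assert (Hm := is_lim_seq_minus' _ _ _ _ (is_lim_seq_const (u 0%nat)) Hu).
    assert (H := is_lim_seq_scal_r _ (/ r) _ Hm). simpl in H.
    replace (/ Rpower c r / r) with ((u 0%nat - 0) * / r).
    2:{ unfold u; simpl. rewrite Rplus_0_r. unfold Rdiv; ring. }
    exact H. }
  apply is_lim_seq_Reals in Hlim.
  intros eps He. destruct (Hlim eps He) as [N HN]. exists N. intros n Hn.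
  assert (E : sum_f_R0 (fun k => (/ Rpower (c + INR k) r - / Rpower (c + INR k + 1) r) / r) n
     = sum_f_R0 (fun k => (u k - u (S k)) / r) n).
  { apply sum_eq. intros. unfold u. rewrite S_INR, Rplus_assoc. reflexivity. }
  rewrite E, Hsum. now apply HN.
Qed.
Lemma pbound c s : 0 < c -> 1 < s ->
  ex_series (fun k => / Rpower (c + INR k + 1) s) /\
  Series (fun k => / Rpower (c + INR k + 1) s) <= / Rpower c (s - 1) / (s - 1).
Proof.
  intros Hc Hs.
  assert (HT := tele_series c (s-1) Hc ltac:(lra)).
  assert (Hle : forall k, 0 <= / Rpower (c + INR k + 1) s <=
     (/ Rpower (c + INR k) (s-1) - / Rpower (c + INR k + 1) (s-1)) / (s-1)).
  { intros k. split. left; apply Rinv_0_lt_compat, Rp_pos.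
    replace s with ((s-1)+1) at 1 by ring. apply tele_ineq.
    assert (0 <= INR k) by apply pos_INR. lra. lra. }
  assert (HE : ex_series (fun k => / Rpower (c + INR k + 1) s)).
  { eapply (@ex_series_le R_AbsRing R_CompleteNormedModule); [| eexists; exact HT].
    intros n; change (norm ?x) with (Rabs x). rewrite Rabs_pos_eq; apply Hle. }
  split; auto.
  rewrite <- (is_series_unique _ _ HT). apply Series_le; auto. eexists; exact HT.
Qed.

Lemma pseries b p : 0 < b -> 1 < p -> ex_series (fun k => / Rpower (INR k + b) p).
Proof.
  intros Hb Hp. apply ex_series_incr_1.
  apply ex_series_ext with (fun k => / Rpower (b + INR k + 1) p).
  { intros; rewrite S_INR. f_equal. f_equal. ring. }
  apply pbound; auto.
Qed.

Lemma pow_le1 t k : 0 <= t <= 1 -> 0 <= t ^ k <= 1.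
Proof.
  intros Ht; induction k; simpl. lra. nra.
Qed.

Lemma alt_series t c : 0 < t <= 1 -> (forall k, c (S k) <= c k) -> (forall k, 0 <= c k) ->
  is_lim_seq c 0 ->
  ex_series (fun k => (-t)^k * c k) /\ c 0%nat - t * c 1%nat <= Series (fun k => (-t)^k * c k).
Proof.
  intros Ht Hd Hn Hl.
  set (U := fun k => t ^ k * c k).
  assert (HUd : Un_decreasing U).
  { intros k. unfold U. simpl. pose proof (pow_le1 t k ltac:(lra)).
    pose proof (Hd k). pose proof (Hn k). pose proof (Hn (S k)).
    assert (t * t^k <= t^k) by nra.
    rewrite Rmult_assoc. apply Rle_trans with (t^k * c (S k)).
    { rewrite <- Rmult_assoc. apply Rmult_le_compat_r; lra. }
    apply Rmult_le_compat_l; lra. }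
  assert (HUl : Un_cv U 0).
  { apply is_lim_seq_Reals. apply is_lim_seq_le_le with (fun _ => 0) c; auto.
    2: apply is_lim_seq_const.
    intros k. unfold U. pose proof (pow_le1 t k ltac:(lra)). pose proof (Hn k). nra. }
  destruct (alternated_series U HUd HUl) as [l Hl'].
  assert (Eq : tg_alt U = fun k => (-t)^k * c k).
  { apply functional_extensionality. intros k. unfold tg_alt, U.
    replace (-t) with ((-1) * t) by ring. rewrite Rpow_mult_distr. ring. }
  assert (Hineq := alternated_series_ineq U l 0 HUd HUl Hl').
  rewrite Eq in Hl'.
  assert (His : is_series (fun k => (-t)^k * c k) l) by (apply is_series_Reals; exact Hl').
  split. eexists; exact His.
  rewrite (is_series_unique _ _ His). simpl in Hineq. unfold tg_alt, U in Hineq. simpl in Hineq. lra.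
Qed.

Lemma geo_series z c C : 0 < z < 1 -> (forall k, 0 <= c k <= C) ->
  ex_series (fun k => z^k * c k).
Proof.
  intros Hz Hc.
  apply (@ex_series_le R_AbsRing R_CompleteNormedModule) with (fun k => z^k * C).
  { intros n; change (norm ?x) with (Rabs x). pose proof (pow_le1 z n ltac:(lra)).
    pose proof (Hc n). rewrite Rabs_pos_eq by nra. nra. }
  apply ex_series_scal_r. apply ex_series_geom. rewrite Rabs_pos_eq; lra.
Qed.

Lemma convex x s : 0 < x -> 0 < s ->
  2 * / Rpower (x + 1) s <= / Rpower x s + / Rpower (x + 2) s.
Proof.
  intros Hx Hs.
  assert (HAC : Rpower x s * Rpower (x+2) s <= Rpower (x+1) s * Rpower (x+1) s).
  { rewrite !Rpower_mult_distr by lra. apply Rle_Rpower_l. lra. split; nra. }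
  set (A := Rpower x s) in *. set (B := Rpower (x+1) s) in *. set (C := Rpower (x+2) s) in *.
  assert (0 < A) by apply Rp_pos. assert (0 < B) by apply Rp_pos. assert (0 < C) by apply Rp_pos.
  assert (K : 2 * A * C <= (A + C) * B).
  { destruct (Rle_or_lt (2*A*C) ((A+C)*B)) as [h|h]; auto.
    exfalso. assert (0 <= (A - C)^2) by apply pow2_ge_0.
    assert (((A+C)*B)^2 < (2*A*C)^2).
    { apply Rsqr_incrst_1 in h. unfold Rsqr in h. nra. nra. nra. }
    assert (4*A*C <= (A+C)^2) by nra.
    assert (4*A*C*(B*B) <= (A+C)^2*(B*B)) by (apply Rmult_le_compat_r; nra).
    assert (4*A*C*(A*C) <= 4*A*C*(B*B)) by (apply Rmult_le_compat_l; nra).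
    nra. }
  apply (Rmult_le_reg_r (A*B*C)). { repeat apply Rmult_lt_0_compat; lra. }
  replace (2 * / B * (A * B * C)) with (2 * A * C) by (field; lra).
  replace ((/ A + / C) * (A * B * C)) with ((A + C) * B) by (field; lra).
  lra.
Qed.

Definition hm (s2 a : R) (m k : nat) := / Rpower (INR m + INR k + 1 + a) s2.

Section Inner.
Variables (s2 a : R).
Hypothesis (Ha : 0 < a) (Hs2 : 0 < s2).

Lemma base_pos m k : 0 < INR m + INR k + 1 + a.
Proof. pose proof (pos_INR m); pose proof (pos_INR k); lra. Qed.

Lemma hm_pos m k : 0 < hm s2 a m k.
Proof. apply Rinv_0_lt_compat, Rp_pos. Qed.

Lemma hm_shift m k : hm s2 a (S m) k = hm s2 a m (S k).
Proof. unfold hm. rewrite !S_INR. f_equal. f_equal. ring. Qed.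

Lemma hm_dec m k : hm s2 a m (S k) < hm s2 a m k.
Proof.
  unfold hm. apply Rinv_lt_contravar.
  apply Rmult_lt_0_compat; apply Rp_pos.
  apply Rlt_Rpower_l; auto. split. apply base_pos. rewrite S_INR; lra.
Qed.

Lemma hm_lim m : is_lim_seq (hm s2 a m) 0.
Proof.
  apply is_lim_seq_ext with (fun k => / Rpower (INR k + (INR m + 1 + a)) s2).
  { intros k; unfold hm; f_equal; f_equal; ring. }
  apply lim0; auto. pose proof (pos_INR m); lra.
Qed.

Lemma hm_conv m k : 2 * hm s2 a m (S k) <= hm s2 a m k + hm s2 a m (S (S k)).
Proof.
  unfold hm. rewrite !S_INR.
  replace (INR m + (INR k + 1) + 1 + a) with ((INR m + INR k + 1 + a) + 1) by ring.
  replace (INR m + (INR k + 1 + 1) + 1 + a) with ((INR m + INR k + 1 + a) + 2) by ring.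
  apply convex; auto. apply base_pos.
Qed.

Definition InnerGood z2 := forall m,
  ex_series (Phi2_inner_term s2 a z2 m) /\ 0 < Phi2_inner s2 a z2 m /\
  Phi2_inner s2 a z2 (S m) <= Phi2_inner s2 a z2 m.

Lemma term_eq z2 m k : Phi2_inner_term s2 a z2 m k = z2 ^ k * hm s2 a m k.
Proof. reflexivity. Qed.

Lemma inner_pos z2 : 0 < z2 < 1 -> InnerGood z2.
Proof.
  intros Hz.
  assert (HE : forall m, ex_series (Phi2_inner_term s2 a z2 m)).
  { intros m. apply ex_series_ext with (fun k => z2^k * hm s2 a m k). intros; reflexivity.
    apply geo_series with (hm s2 a m 0%nat); auto.
    intros k; split. left; apply hm_pos. induction k. lra. pose proof (hm_dec m k). lra. }
  intros m; split; [|split]; auto.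
  - apply Series_gt0; auto.
    intros n; rewrite term_eq. pose proof (hm_pos m n); pose proof (pow_le1 z2 n ltac:(lra)). nra.
    rewrite term_eq. simpl. pose proof (hm_pos m 0). lra.
  - apply Series_le; auto. intros n; rewrite !term_eq, hm_shift.
    pose proof (hm_pos m (S n)); pose proof (hm_dec m n); pose proof (pow_le1 z2 n ltac:(lra)).
    assert (0 < z2 ^ n) by (apply pow_lt; lra).
    split. nra. apply Rmult_le_compat_l; lra.
Qed.

Lemma inner_neg z2 : -1 <= z2 < 0 -> InnerGood z2.
Proof.
  intros Hz. set (t := - z2). replace z2 with (- t) by (unfold t; ring).
  assert (Ht : 0 < t <= 1) by (unfold t; lra). clearbody t.
  assert (HA : forall m, ex_series (fun k => (-t)^k * hm s2 a m k) /\
     hm s2 a m 0%nat - t * hm s2 a m 1%nat <= Series (fun k => (-t)^k * hm s2 a m k)).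
  { intros m. apply alt_series; auto. intros k; left; apply hm_dec.
    intros k; left; apply hm_pos. apply hm_lim. }
  intros m. destruct (HA m) as [HE1 HS1]. destruct (HA (S m)) as [HE2 _].
  split; [exact HE1|split].
  - unfold Phi2_inner. pose proof (hm_dec m 0); pose proof (hm_pos m 1).
    assert (t * hm s2 a m 1%nat <= hm s2 a m 1%nat) by nra.
    change (Series (Phi2_inner_term s2 a (- t) m)) with (Series (fun k => (-t)^k * hm s2 a m k)). lra.
  - unfold Phi2_inner.
    change (Series (Phi2_inner_term s2 a (- t) m)) with (Series (fun k => (-t)^k * hm s2 a m k)).
    change (Series (Phi2_inner_term s2 a (- t) (S m))) with (Series (fun k => (-t)^k * hm s2 a (S m) k)).
    set (d := fun k => hm s2 a m k - hm s2 a m (S k)).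
    assert (Hd : ex_series (fun k => (-t)^k * d k) /\ d 0%nat - t * d 1%nat <= Series (fun k => (-t)^k * d k)).
    { apply alt_series; auto.
      - intros k; unfold d. cbv beta; pose proof (hm_conv m k). lra.
      - intros k; unfold d. pose proof (hm_dec m k). lra.
      - apply is_lim_seq_le_le with (fun _ => 0) (hm s2 a m).
        intros k; unfold d; pose proof (hm_dec m k); pose proof (hm_pos m (S k)); lra.
        apply is_lim_seq_const. apply hm_lim. }
    destruct Hd as [_ Hd].
    rewrite (Series_ext (fun k => (-t)^k * d k)
       (fun k => (-t)^k * hm s2 a m k - (-t)^k * hm s2 a (S m) k)) in Hd.
    2:{ intros k; unfold d; rewrite hm_shift; ring. }
    rewrite Series_minus in Hd by auto.
    assert (0 <= d 0%nat - t * d 1%nat).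
    { unfold d. pose proof (hm_conv m 0). pose proof (hm_dec m 1). nra. }
    lra.
Qed.

Lemma inner_one : 1 < s2 -> InnerGood 1 /\
  forall m, Phi2_inner s2 a 1 m <= / Rpower (INR m + a) (s2 - 1) / (s2 - 1).
Proof.
  intros Hs.
  assert (HP : forall m, ex_series (Phi2_inner_term s2 a 1 m) /\
     Phi2_inner s2 a 1 m <= / Rpower (INR m + a) (s2 - 1) / (s2 - 1)).
  { intros m. assert (Hc : 0 < INR m + a) by (pose proof (pos_INR m); lra).
    destruct (pbound _ _ Hc Hs) as [HE HB].
    assert (Eq : forall k, / Rpower (INR m + a + INR k + 1) s2 = Phi2_inner_term s2 a 1 m k).
    { intros k. rewrite term_eq, pow1, Rmult_1_l. unfold hm. f_equal. f_equal. ring. }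
    split. eapply ex_series_ext; [exact Eq|exact HE].
    unfold Phi2_inner. rewrite <- (Series_ext _ _ Eq). exact HB. }
  split; [|intros m; apply HP].
  intros m; split; [|split]; [apply HP| |].
  - apply Series_gt0. apply HP.
    intros n; rewrite term_eq, pow1; left; rewrite Rmult_1_l; apply hm_pos.
    rewrite term_eq, pow1, Rmult_1_l; apply hm_pos.
  - apply Series_le. 2: apply HP. intros n; rewrite !term_eq, pow1, !Rmult_1_l, hm_shift.
    pose proof (hm_pos m (S n)); pose proof (hm_dec m n). lra.
Qed.

End Inner.

Lemma outer_main s1 s2 a z1 z2 : 0 < a -> 0 < s1 -> InnerGood s2 a z2 ->
  ((0 < z1 < 1) \/ (-1 <= z1 < 0) \/
   (z1 = 1 /\ ex_series (fun m => / Rpower (INR m + a) s1 * Phi2_inner s2 a z2 m))) ->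
  Phi2_converges s1 s2 a z1 z2 /\ 0 < Phi2 s1 s2 a z1 z2.
Proof.
  intros Ha Hs1 HI Hz.
  set (g := fun m => / Rpower (INR m + a) s1 * Phi2_inner s2 a z2 m).
  assert (Hteq : forall m, Phi2_outer_term s1 s2 a z1 z2 m = z1 ^ m * g m).
  { intros m; unfold Phi2_outer_term, g, Rdiv; ring. }
  assert (Hr : forall m, 0 < / Rpower (INR m + a) s1) by (intros; apply Rinv_0_lt_compat, Rp_pos).
  assert (Hrd : forall m, / Rpower (INR (S m) + a) s1 < / Rpower (INR m + a) s1).
  { intros m. apply Rinv_lt_contravar. apply Rmult_lt_0_compat; apply Rp_pos.
    apply Rlt_Rpower_l; auto. rewrite S_INR. pose proof (pos_INR m). lra. }
  assert (Hgp : forall m, 0 < g m).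
  { intros m; unfold g. apply Rmult_lt_0_compat; auto. apply HI. }
  assert (Hgd : forall m, g (S m) < g m).
  { intros m; unfold g. destruct (HI m) as [_ [H1 H2]]. destruct (HI (S m)) as [_ [H3 _]].
    pose proof (Hr (S m)); pose proof (Hrd m).
    apply Rle_lt_trans with (/ Rpower (INR (S m) + a) s1 * Phi2_inner s2 a z2 m).
    apply Rmult_le_compat_l; lra. apply Rmult_lt_compat_r; lra. }
  assert (HIall : forall m, ex_series (Phi2_inner_term s2 a z2 m)) by (intros; apply HI).
  destruct Hz as [Hz|[Hz|[Hz HE]]].
  - assert (HE : ex_series (Phi2_outer_term s1 s2 a z1 z2)).
    { apply ex_series_ext with (fun m => z1^m * g m). intros; now rewrite Hteq.
      apply geo_series with (g 0%nat); auto. intros k; split. left; auto.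
      induction k. lra. pose proof (Hgd k); lra. }
    split. split; auto.
    apply Series_gt0; auto. intros n; rewrite Hteq. pose proof (Hgp n).
    assert (0 < z1 ^ n) by (apply pow_lt; lra). nra.
    rewrite Hteq; simpl. pose proof (Hgp 0%nat); lra.
  - set (t := - z1). assert (Hze : z1 = - t) by (unfold t; ring).
    assert (Ht : 0 < t <= 1) by (unfold t; lra). clearbody t. subst z1.
    assert (HA : ex_series (fun k => (-t)^k * g k) /\ g 0%nat - t * g 1%nat <= Series (fun k => (-t)^k * g k)).
    { apply alt_series; auto. intros k; left; auto. intros k; left; auto.
      apply is_lim_seq_le_le with (fun _ => 0) (fun m => / Rpower (INR m + a) s1 * Phi2_inner s2 a z2 0).
      - intros m; split. left; auto. unfold g. apply Rmult_le_compat_l. left; auto.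
        clear -HI. induction m. lra. destruct (HI m) as [_ [_ H]]. lra.
      - apply is_lim_seq_const.
      - replace (Finite 0) with (Rbar_mult 0 (Phi2_inner s2 a z2 0)) by (simpl; f_equal; ring).
        apply is_lim_seq_scal_r. apply lim0; auto. }
    destruct HA as [HE HS].
    split. split; auto. eapply ex_series_ext; [|exact HE]. intros; now rewrite Hteq.
    unfold Phi2. rewrite (Series_ext _ _ Hteq).
    pose proof (Hgd 0%nat); pose proof (Hgp 1%nat).
    assert (t * g 1%nat <= g 1%nat) by nra. lra.
  - subst z1.
    assert (HE' : ex_series (Phi2_outer_term s1 s2 a 1 z2)).
    { apply (ex_series_ext g). 2: exact HE. intros n; rewrite Hteq, pow1. now rewrite Rmult_1_l. }
    split. split; auto.
    apply Series_gt0; auto. intros n; rewrite Hteq, pow1. pose proof (Hgp n); lra.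
    rewrite Hteq, pow1. pose proof (Hgp 0%nat); lra.
Qed.

Theorem lemma3p7 (a : R) (ha : 0 < a <= 1) :
  (forall s1 s2 : R, 0 < s1 -> 1 < s2 -> 2 < s1 + s2 ->
     Phi2_converges s1 s2 a 1 1 /\ 0 < Phi2 s1 s2 a 1 1) /\
  (forall z2 : R, -1 <= z2 < 1 -> z2 <> 0 ->
   forall s1 s2 : R, 1 < s1 -> 0 < s2 ->
     Phi2_converges s1 s2 a 1 z2 /\ 0 < Phi2 s1 s2 a 1 z2) /\
  (forall z1 : R, -1 <= z1 < 1 -> z1 <> 0 ->
   forall s1 s2 : R, 0 < s1 -> 1 < s2 ->
     Phi2_converges s1 s2 a z1 1 /\ 0 < Phi2 s1 s2 a z1 1) /\
  (forall z1 z2 : R, -1 <= z1 < 1 -> z1 <> 0 -> -1 <= z2 < 1 -> z2 <> 0 ->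
   forall s1 s2 : R, 0 < s1 -> 0 < s2 ->
     Phi2_converges s1 s2 a z1 z2 /\ 0 < Phi2 s1 s2 a z1 z2).
Proof.
  destruct ha as [Ha _].
  assert (Hin : forall s2 z2, 0 < s2 -> -1 <= z2 < 1 -> z2 <> 0 -> InnerGood s2 a z2).
  { intros s2 z2 Hs Hz Hz0. destruct (Rlt_or_le 0 z2).
    apply inner_pos; auto; lra. apply inner_neg; auto; lra. }
  assert (Hz1 : forall z1, -1 <= z1 < 1 -> z1 <> 0 -> (0 < z1 < 1) \/ (-1 <= z1 < 0)).
  { intros z1 Hz Hz0. destruct (Rlt_or_le 0 z1); [left|right]; lra. }
  split; [|split; [|split]].
  - intros s1 s2 Hs1 Hs2 Hs12.
    destruct (inner_one s2 a Ha ltac:(lra) Hs2) as [HI HB].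
    apply outer_main; auto. right; right; split; auto.
    apply (@ex_series_le R_AbsRing R_CompleteNormedModule) with
      (fun m => / Rpower (INR m + a) (s1 + (s2 - 1)) * / (s2 - 1)).
    { intros n; change (norm ?x) with (Rabs x).
      assert (0 < / Rpower (INR n + a) s1) by (apply Rinv_0_lt_compat, Rp_pos).
      destruct (HI n) as [_ [Hp _]].
      rewrite Rabs_pos_eq by nra.
      rewrite Rpower_plus, Rinv_mult.
      specialize (HB n). unfold Rdiv in HB.
      rewrite Rmult_assoc. apply Rmult_le_compat_l; lra. }
    apply ex_series_scal_r. apply pseries; auto. lra.
  - intros z2 Hz Hz0 s1 s2 Hs1 Hs2.
    assert (HI := Hin s2 z2 Hs2 Hz Hz0).
    apply outer_main; auto. lra. right; right; split; auto.
    apply (@ex_series_le R_AbsRing R_CompleteNormedModule) with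
      (fun m => / Rpower (INR m + a) s1 * Phi2_inner s2 a z2 0).
    { intros n; change (norm ?x) with (Rabs x).
      assert (0 < / Rpower (INR n + a) s1) by (apply Rinv_0_lt_compat, Rp_pos).
      destruct (HI n) as [_ [Hp _]].
      rewrite Rabs_pos_eq by nra.
      apply Rmult_le_compat_l. lra.
      clear -HI. induction n. lra. destruct (HI n) as [_ [_ H]]. lra. }
    apply ex_series_scal_r. apply pseries; auto.
  - intros z1 Hz Hz0 s1 s2 Hs1 Hs2.
    destruct (inner_one s2 a Ha ltac:(lra) Hs2) as [HI _].
    apply outer_main; auto. destruct (Hz1 z1 Hz Hz0); auto.
  - intros z1 z2 Hz Hz0 Hw Hw0 s1 s2 Hs1 Hs2.
    apply outer_main; auto. destruct (Hz1 z1 Hz Hz0); auto.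
Qed.
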